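(* Let $q$ be odd, let $C_1,C_2$ be linear codes of length $n$ over $\mathbb{F}_q$, let $C=\{[\mathbf{u}+\mathbf{v},\mathbf{u}-\mathbf{v}] : \mathbf{u}\in C_1,\mathbf{v}\in C_2\}\subseteq\mathbb{F}_q^{2n}$, and let $1\le b\le n$. Then: (a) $d_b(C)\ge\min\{2d_b(C_1),\,d_b(C_2)\}$; (b) $d_b(C)\ge\min\{d_b(C_1),\,2d_b(C_2)\}$; (c) $\min\{d_b(C_1),d_b(C_2)\}\le d_b(C)\le\min\{2d_b(C_1),\,2d_b(C_2)\}$; (d) if there exist $\mathbf{x}\in C_1\cap C_2$ and a hole $H\in\mathbb{H}(\chi_1(\mathbf{x}))$ such that $w_b(\mathbf{x})=\min\{d_b(C_1),d_b(C_2)\}$, $|H|\ge b-1$, and $\{1,n\}\cap H\ne\emptyset$, then $d_b(C)=\min\{d_b(C_1),d_b(C_2)\}$.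
   Context: For $\mathbf{x}\in\mathbb{F}_q^L$ and $1\le b\le L$, $\chi_b(\mathbf{x})=\{i\in\{1,\dots,L\}:(x_i,\dots,x_{i+b-1})\ne\mathbf{0}\}$ with indices mod $L$, $w_b(\mathbf{x})=|\chi_b(\mathbf{x})|$, and for a linear code $C$, $d_b(C)=\min_{\mathbf{0}\ne\mathbf{c}\in C}w_b(\mathbf{c})$; $\chi_1$ is the Hamming support. For $J\subseteq\mathbb{Z}_n=\{1,\dots,n\}$, a hole of $J$ of size $h\ge1$ is a set $\{a+1,\dots,a+h\}\subseteq\mathbb{Z}_n\setminus J$ (indices mod $n$) with $a,a+h+1\in J$; $\mathbb{H}(J)$ is the set of holes of $J$. *)

(* Defs.v *)
From HB Require Import structures.
From mathcomp Require Import all_boot all_order all_algebra.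
Set Implicit Arguments. Unset Strict Implicit. Unset Printing Implicit Defensive.
Import GRing.Theory.
Local Open Scope ring_scope.

(* Positions of a vector in F^L are 0-based: position i : 'I_L corresponds to
   index i+1 of the paper; indices are taken mod L. *)

Definition chi (F : finFieldType) (L : nat) (b : nat) (x : 'rV[F]_L) : {set 'I_L} :=
  [set i : 'I_L | [exists k : 'I_b, exists j : 'I_L,
      (((i + k) %% L)%N == j) && (x 0 j != 0)]].

Definition wb (F : finFieldType) (L : nat) (b : nat) (x : 'rV[F]_L) : nat :=
  #|chi b x|.

(* d_b(C) = min over nonzero codewords of w_b; convention: L.+1 (acts as
   +infinity, since every weight is <= L) when C has no nonzero element. *)
Definition db (F : finFieldType) (L : nat) (b : nat) (C : {set 'rV[F]_L}) : nat :=
  \big[minn/L.+1]_(c in C | c != 0) wb b c.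

Definition codeset (F : finFieldType) (n : nat) (U : {vspace 'rV[F]_n}) : {set 'rV[F]_n} :=
  [set c : 'rV[F]_n | c \in U].

Definition pmcode (F : finFieldType) (n : nat) (C1 C2 : {vspace 'rV[F]_n})
  : {set 'rV[F]_(n + n)} :=
  [set w : 'rV[F]_(n + n) | [exists u : 'rV[F]_n, exists v : 'rV[F]_n,
     [&& u \in C1, v \in C2 & w == row_mx (u + v) (u - v)]]].

Definition is_hole (n : nat) (J H : {set 'I_n}) : Prop :=
  exists (a : 'I_n) (h : nat),
    [/\ (1 <= h)%N, a \in J,
        [exists j : 'I_n, (((a + h.+1) %% n)%N == j) && (j \in J)],
        H = [set i : 'I_n | [exists k : 'I_h.+1, (0 < k)%N && (((a + k) %% n)%N == i)]]
      & [disjoint H & J]].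

(* Main.v *)
Require Import Defs.
From HB Require Import structures.
From mathcomp Require Import all_boot all_order all_algebra all_field.
From mathcomp Require Import zify.
Set Implicit Arguments. Unset Strict Implicit.
Import GRing.Theory.
Local Open Scope ring_scope.

Lemma two_nz (F : finFieldType) : odd #|F| -> (2%:R : F) != 0.
Proof.
move=> oF; apply/negP => H2.
have ch : (2%N \in [pchar F]) by apply/andP; split.
have E := card_pprimeChar ch.
move: oF; rewrite [X in odd X]E oddX orbF => /eqP L0.
have := finNzRing_gt1 F.
by rewrite [X in (1 < X)%N]E L0.
Qed.

Lemma card_inj (T U : finType) (A : {set T}) (B : {set U}) (f : T -> U) :
  {in A &, injective f} -> (forall x, x \in A -> f x \in B) -> (#|A| <= #|B|)%N.
Proof.
move=> inj fAB; rewrite -(card_in_imset inj); apply: subset_leq_card.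
by apply/subsetP => _ /imsetP [x xA ->]; apply: fAB.
Qed.

Section S.
Variable F : finFieldType.
Implicit Types (L b : nat).

Lemma chiP L b (x : 'rV[F]_L) (i : 'I_L) :
  i \in chi b x <-> exists k, (k < b)%N /\ exists j : 'I_L, nat_of_ord j = ((i + k) %% L)%N /\ x 0 j != 0.
Proof.
rewrite inE; split.
  move/existsP => [k /existsP [j /andP [/eqP e nz]]].
  by exists k; split => //; exists j.
move=> [k [kb [j [e nz]]]]; apply/existsP; exists (Ordinal kb); apply/existsP; exists j.
by rewrite /= e eqxx.
Qed.

Lemma wb_le L b (x : 'rV[F]_L) : (wb b x <= L)%N.
Proof. by rewrite /wb -[X in (_ <= X)%N]card_ord max_card. Qed.

Lemma db_le L b (C : {set 'rV[F]_L}) c : c \in C -> c != 0 -> (db b C <= wb b c)%N.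
Proof.
move=> cC nz; rewrite /db -big_filter.
set s0 := filter _ _.
have : c \in s0 by rewrite mem_filter cC nz mem_index_enum.
elim: s0 => // a s IH; rewrite inE big_cons => /orP [/eqP -> | /IH h].
  exact: geq_minl.
exact: leq_trans (geq_minr _ _) h.
Qed.

Lemma db_ge L b (C : {set 'rV[F]_L}) m : (m <= L.+1)%N ->
  (forall c, c \in C -> c != 0 -> (m <= wb b c)%N) -> (m <= db b C)%N.
Proof.
move=> mL H; rewrite /db; apply: (big_ind (fun x => (m <= x)%N)) => //.
  by move=> x y hx hy; rewrite leq_min hx hy.
by move=> c /andP [cC nz]; apply: H.
Qed.

Lemma db_leL L b (C : {set 'rV[F]_L}) : (db b C <= L.+1)%N.
Proof.
rewrite /db; apply: (big_ind (fun x => (x <= L.+1)%N)) => //.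
  by move=> x y hx _; exact: leq_trans (geq_minl x y) hx.
by move=> c _; exact: (leq_trans (wb_le b c) (leqnSn L)).
Qed.


Lemma modn_sub n x : (n <= x)%N -> (x < n + n)%N -> (x %% n = x - n)%N.
Proof. by move=> h1 h2; rewrite -{1}(subnKC h1) modnDl modn_small //; lia. Qed.

Lemma modn_cases x m : (x < m + m)%N ->
  ((x < m)%N /\ (x %% m = x)%N) \/ ((m <= x)%N /\ (x %% m = x - m)%N).
Proof.
move=> h; case: (ltnP x m) => h2; [left | right]; split => //.
  exact: modn_small.
exact: modn_sub.
Qed.

Lemma arithK n b i1 i2 k1 k2 s1 s2 : (b <= n)%N -> (i1 < n+n)%N -> (i2 < n+n)%N ->
  (i1 %% n = i2 %% n)%N -> (k1 < b)%N -> (k2 < b)%N ->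
  s1 = ((i1+k1)%%(n+n))%N -> s2 = ((i2+k2)%%(n+n))%N -> (s1 < n)%N -> (s2 < n)%N ->
  (s1 + b <= n + s2)%N -> (s2 + b <= n + s1)%N -> i1 = i2.
Proof.
move=> bn h1 h2 e k1b k2b -> -> l1 l2.
have h3 : (i1 + k1 < (n+n) + (n+n))%N by lia.
have h4 : (i2 + k2 < (n+n) + (n+n))%N by lia.
have [[c1 m1]|[c1 m1]] := modn_cases h1; rewrite m1 in e; clear m1.
all: have [[c2 m2]|[c2 m2]] := modn_cases h2; rewrite m2 in e; clear m2.
all: have [[c3 m3]|[c3 m3]] := modn_cases h3; rewrite m3 in l1 *; clear m3.
all: have [[c4 m4]|[c4 m4]] := modn_cases h4; rewrite m4 in l2 *; clear m4.
all: lia.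
Qed.

Lemma modfix n q s x : (x = q * n + s)%N -> (s < n)%N -> (x %% n = s)%N.
Proof. by move=> -> sn; rewrite modnMDl modn_small. Qed.

Lemma modfix2 n q s x : (x + n = q * n + s)%N -> (s < n)%N -> (x %% n = s)%N.
Proof. by move=> e sn; rewrite -modnDr e modnMDl modn_small. Qed.

Lemma rowmx_l n (y z : 'rV[F]_n) (j : 'I_(n+n)) (p : 'I_n) :
  nat_of_ord j = nat_of_ord p -> row_mx y z 0 j = y 0 p.
Proof. move=> e; have -> : j = lshift n p by apply: val_inj; rewrite /= e. by rewrite row_mxEl. Qed.

Lemma rowmx_r n (y z : 'rV[F]_n) (j : 'I_(n+n)) (p : 'I_n) :
  nat_of_ord j = (n + nat_of_ord p)%N -> row_mx y z 0 j = z 0 p.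
Proof. move=> e; have -> : j = rshift n p by apply: val_inj; rewrite /= e. by rewrite row_mxEr. Qed.

Lemma core n b (y z : 'rV[F]_n) (i t : 'I_n) k : (b <= n)%N -> (k < b)%N ->
  nat_of_ord t = ((i + k) %% n)%N ->
  exists jl jr : 'I_(n+n), [/\ nat_of_ord jl = ((lshift n i + k) %% (n+n))%N,
     nat_of_ord jr = ((rshift n i + k) %% (n+n))%N &
     (row_mx y z 0 jl = y 0 t /\ row_mx y z 0 jr = z 0 t) \/
     (row_mx y z 0 jl = z 0 t /\ row_mx y z 0 jr = y 0 t)].
Proof.
move=> bn kb et; have ti := ltn_ord t; have ii := ltn_ord i; rewrite /=.
case: (ltnP (i+k) n) => h.
  rewrite modn_small // in et.
  exists (lshift n t), (rshift n t); split => /=.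
  - rewrite modn_small; lia.
  - rewrite modn_small; lia.
  - left; split; [exact: rowmx_l | exact: rowmx_r].
rewrite modn_sub // in et; last by lia.
exists (rshift n t), (lshift n t); split => /=.
- rewrite modn_small; lia.
- rewrite modn_sub; lia.
- right; split; [exact: rowmx_r | exact: rowmx_l]; rewrite /=; lia.
Qed.

Lemma chi_or n b (x y z : 'rV[F]_n) (i : 'I_n) : (b <= n)%N ->
  (forall p, x 0 p != 0 -> (y 0 p != 0) || (z 0 p != 0)) -> i \in chi b x ->
  (lshift n i \in chi b (row_mx y z)) || (rshift n i \in chi b (row_mx y z)).
Proof.
move=> bn hs /chiP [k [kb [t [et nz]]]].
have [jl [jr [el er H]]] := core y z bn kb et.
have := hs t nz; case: H => [[cl cr]|[cl cr]] /orP [h|h]; apply/orP;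
  [left|right|right|left]; apply/chiP; exists k; split => //;
  [exists jl|exists jr|exists jr|exists jl]; by rewrite ?cl ?cr.
Qed.

Lemma chi_and n b (x y z : 'rV[F]_n) (i : 'I_n) : (b <= n)%N ->
  (forall p, x 0 p != 0 -> (y 0 p != 0) && (z 0 p != 0)) -> i \in chi b x ->
  (lshift n i \in chi b (row_mx y z)) && (rshift n i \in chi b (row_mx y z)).
Proof.
move=> bn hs /chiP [k [kb [t [et nz]]]].
have [jl [jr [el er H]]] := core y z bn kb et.
have /andP [hy hz] := hs t nz; apply/andP; split; apply/chiP; exists k; split => //;
  case: H => [[cl cr]|[cl cr]]; [exists jl|exists jl|exists jr|exists jr]; by rewrite ?cl ?cr.
Qed.

Lemma wb_lower n b (x y z : 'rV[F]_n) : (b <= n)%N ->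
  (forall p, x 0 p != 0 -> (y 0 p != 0) || (z 0 p != 0)) ->
  (wb b x <= wb b (row_mx y z))%N.
Proof.
move=> bn hs; rewrite /wb.
pose f i := if lshift n i \in chi b (row_mx y z) then lshift n i else rshift n i.
apply: (@card_inj _ _ _ _ f).
  have fv : forall i, (val (f i) %% n)%N = val i.
    move=> i; rewrite /f; case: ifP => _ /=; last rewrite modnDl; exact: modn_small.
  by move=> i1 i2 _ _ e; apply: val_inj; rewrite -fv e fv.
move=> i iA; rewrite /f; case: ifP => // h.
by have := chi_or bn hs iA; rewrite h.
Qed.

Lemma wb_double n b (x y z : 'rV[F]_n) : (b <= n)%N ->
  (forall p, x 0 p != 0 -> (y 0 p != 0) && (z 0 p != 0)) ->
  (2 * wb b x <= wb b (row_mx y z))%N.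
Proof.
move=> bn hs; rewrite /wb.
have -> : (2 * #|chi b x| = #|setX (chi b x) [set: bool]|)%N.
  by rewrite cardsX cardsT card_bool mulnC.
pose f (p : 'I_n * bool) := if p.2 then lshift n p.1 else rshift n p.1.
apply: (@card_inj _ _ _ _ f).
  move=> [i1 b1] [i2 b2] _ _; rewrite /f /=.
  case: b1; case: b2 => e.
  - by rewrite (lshift_inj e).
  - by have := ltn_ord i1; have := congr1 val e => /= ->; rewrite ltnNge leq_addr.
  - by have := ltn_ord i2; have := congr1 val e => /= <-; rewrite ltnNge leq_addr.
  - by rewrite (rshift_inj e).
move=> [i bb]; rewrite in_setX /= => /andP [iA _].
by have /andP [h1 h2] := chi_and bn hs iA; rewrite /f; case: bb.
Qed.

Definition part n (i : 'I_(n+n)) : 'I_n := match split i with inl a => a | inr a => a end.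

Lemma part_split n (j : 'I_(n+n)) :
  nat_of_ord j = nat_of_ord (part j) \/ nat_of_ord j = (n + part j)%N.
Proof. by rewrite /part; case: splitP => a ->; [left|right]. Qed.

Lemma part_val n (j : 'I_(n+n)) : nat_of_ord (part j) = (j %% n)%N.
Proof.
have := ltn_ord (part j).
by case: (part_split j) => -> h; rewrite ?modnDl modn_small.
Qed.

Lemma part_chi n b (x y z : 'rV[F]_n) (i : 'I_(n+n)) :
  (forall t, (y 0 t != 0) || (z 0 t != 0) -> x 0 t != 0) ->
  i \in chi b (row_mx y z) -> part i \in chi b x.
Proof.
move=> hs /chiP [k [kb [j [ej nz]]]].
apply/chiP; exists k; split => //; exists (part j); split.
  by rewrite !part_val ej modnDml modn_dvdm // dvdn_add.
apply: hs; case: (part_split j) => e.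
  by rewrite -(rowmx_l y z e) nz.
by rewrite -(rowmx_r y z e) nz orbT.
Qed.

Lemma wb_upper n b (x y z : 'rV[F]_n) :
  (forall t, (y 0 t != 0) || (z 0 t != 0) -> x 0 t != 0) ->
  (wb b (row_mx y z) <= 2 * wb b x)%N.
Proof.
move=> hs; rewrite /wb.
have -> : (2 * #|chi b x| = #|setX (chi b x) [set: bool]|)%N.
  by rewrite cardsX cardsT card_bool mulnC.
pose f (i : 'I_(n+n)) := (part i, (i < n)%N).
apply: (@card_inj _ _ _ _ f).
  move=> i1 i2 _ _ [hp hb]; apply: val_inj => /=.
  have := part_split i1; have := part_split i2; rewrite hp.
  have := ltn_ord (part i2).
  move=> l [] e2 [] e1; rewrite e1 e2 //; rewrite e1 e2 in hb.
    by move: hb; rewrite l ltnNge leq_addr.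
  by move: hb; rewrite l ltnNge leq_addr.
move=> i iA; rewrite in_setX in_setT andbT.
exact: part_chi hs iA.
Qed.

Lemma wb_hole n b (x y : 'rV[F]_n) : (b <= n)%N ->
  (forall s1 s2 : 'I_n, x 0 s1 != 0 -> x 0 s2 != 0 -> (s1 + b <= n + s2)%N) ->
  (forall t, y 0 t != 0 -> x 0 t != 0) ->
  (wb b (row_mx y (0 : 'rV[F]_n)) <= wb b x)%N.
Proof.
move=> bn K hs; rewrite /wb.
have hs' : forall t, (y 0 t != 0) || ((0 : 'rV[F]_n) 0 t != 0) -> x 0 t != 0.
  by move=> t; rewrite mxE eqxx orbF; exact: hs.
apply: (@card_inj _ _ _ _ (@part n)); last by move=> i; exact: part_chi.
have getS : forall i : 'I_(n+n), i \in chi b (row_mx y 0) -> exists k, exists s : 'I_n,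
    [/\ (k < b)%N, nat_of_ord s = ((i + k) %% (n+n))%N & x 0 s != 0].
  move=> i /chiP [k [kb [j [ej nz]]]]; exists k, (part j).
  case: (part_split j) => e.
    by split => //; [rewrite -e | apply: hs; rewrite -(rowmx_l y 0 e)].
  by move: nz; rewrite (rowmx_r y 0 e) mxE eqxx.
move=> i1 i2 /getS [k1 [s1 [k1b e1 nz1]]] /getS [k2 [s2 [k2b e2 nz2]]] hp.
apply: val_inj => /=.
apply: (@arithK n b i1 i2 k1 k2 s1 s2) => //.
- by rewrite -!part_val hp.
- exact: K.
- exact: K.
Qed.

Lemma chi1P n (x : 'rV[F]_n) (i : 'I_n) : (i \in chi 1 x) = (x 0 i != 0).
Proof.
apply/idP/idP.
  move/chiP => [k [kb [j [ej nz]]]].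
  have k0 : k = 0%N by case: k kb {ej} => //.
  have -> : i = j by apply: val_inj; rewrite /= ej k0 addn0 modn_small.
  done.
move=> nz; apply/chiP; exists 0%N; split => //; exists i; split => //.
by rewrite addn0 modn_small.
Qed.

Lemma modfix3 n q s x : (x = q * n + n + s)%N -> (s < n)%N -> (x %% n = s)%N.
Proof. by move=> e sn; apply: (@modfix n q.+1) => //; rewrite e mulSn; lia. Qed.

Lemma hole_K n b (x : 'rV[F]_n) (H : {set 'I_n}) : is_hole (chi 1 x) H -> (b.-1 <= #|H|)%N ->
  [exists i in H, (i == 0%N :> nat) || (i == n.-1 :> nat)] ->
  forall s1 s2 : 'I_n, x 0 s1 != 0 -> x 0 s2 != 0 -> (s1 + b <= n + s2)%N.
Proof.
move=> [a [h [h1 aJ _ HE dis]]] bH /existsP [i /andP [iH ci]] s1 s2 nz1 nz2.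
have n0 : (0 < n)%N by have := ltn_ord a; lia.
have Hh : (#|H| <= h)%N.
  pose f (k : 'I_h.+1) : 'I_n := insubd a ((a + k) %% n)%N.
  have fv : forall k, nat_of_ord (f k) = ((a+k) %% n)%N.
    by move=> k; rewrite /f val_insubd ltn_pmod.
  have sub : H \subset f @: [set k : 'I_h.+1 | (0 < k)%N].
    apply/subsetP => j; rewrite HE inE => /existsP [k /andP [k0 /eqP e]].
    by apply/imsetP; exists k; [rewrite inE | apply: val_inj; rewrite /= fv e].
  apply: leq_trans (subset_leq_card sub) _; apply: leq_trans (leq_imset_card _ _) _.
  have -> : [set k : 'I_h.+1 | (0 < k)%N] = [set~ ord0].
    by apply/setP => k; rewrite !inE lt0n -val_eqE.
  by rewrite cardsC1 card_ord.
have notS : forall k (s : 'I_n), (0 < k)%N -> (k <= h)%N ->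
    nat_of_ord s = ((a + k) %% n)%N -> x 0 s == 0.
  move=> k s k0 kh es; case: (boolP (x 0 s == 0)) => // nz.
  have sH : s \in H.
    rewrite HE inE; apply/existsP; exists (Ordinal (kh : (k < h.+1)%N)).
    by rewrite /= k0 -es eqxx.
  by have := disjointFr dis sH; rewrite chi1P nz.
rewrite HE inE in iH; case/existsP: iH => k0 /andP [k0pos /eqP ei].
have [q E] : exists q, (a + k0 = q * n + i)%N.
  by exists ((a + k0) %/ n)%N; rewrite {1}(divn_eq (a + k0)%N n) ei.
clear ei.
have k0h : (k0 <= h)%N by have := ltn_ord k0; lia.
have hb : (b <= h.+1)%N by lia.
rewrite leqNgt; apply/negP => lt.
have s1n := ltn_ord s1; have s2n := ltn_ord s2.
case/orP: ci => /eqP ie.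
  case: (ltnP n (s1 + k0)) => c.
    have e1 : nat_of_ord s1 = ((a + (k0 + s1 - n)) %% n)%N.
      by apply: esym; apply: (@modfix2 n q) => //; move: E; generalize (q * n)%N => Q E; lia.
    by move: (notS (k0 + s1 - n)%N s1 ltac:(lia) ltac:(lia) e1); rewrite (negbTE nz1).
  have e1 : nat_of_ord s2 = ((a + (k0 + s2)) %% n)%N.
    by apply: esym; apply: (@modfix n q) => //; move: E; generalize (q * n)%N => Q E; lia.
  by move: (notS (k0 + s2)%N s2 ltac:(lia) ltac:(lia) e1); rewrite (negbTE nz2).
case: (ltnP (s1 + k0) n) => c.
  have e1 : nat_of_ord s2 = ((a + (k0 + s2 + 1)) %% n)%N.
    by apply: esym; apply: (@modfix3 n q) => //; move: E; generalize (q * n)%N => Q E; lia.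
  by move: (notS (k0 + s2 + 1)%N s2 ltac:(lia) ltac:(lia) e1); rewrite (negbTE nz2).
have e1 : nat_of_ord s1 = ((a + (k0 + s1 + 1 - n)) %% n)%N.
  by apply: esym; apply: (@modfix n q) => //; move: E; generalize (q * n)%N => Q E; lia.
by move: (notS (k0 + s1 + 1 - n)%N s1 ltac:(lia) ltac:(lia) e1); rewrite (negbTE nz1).
Qed.

Lemma db_mul_le L b (C : {set 'rV[F]_L}) k :
  (forall c, c \in C -> c != 0 -> (k <= 2 * wb b c)%N) -> (k <= 2 * L.+1)%N ->
  (k <= 2 * db b C)%N.
Proof.
move=> H hL; rewrite /db; apply: (big_ind (fun y => (k <= 2 * y)%N)) => //.
  by move=> x y hx hy; rewrite /minn; case: ifP.
by move=> c /andP [cC nz]; apply: H.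
Qed.

Lemma supp_u n (u v : 'rV[F]_n) p : (2%:R : F) != 0 ->
  u 0 p != 0 -> ((u + v) 0 p != 0) || ((u - v) 0 p != 0).
Proof.
move=> two nz; rewrite !mxE; apply: contraR nz => /norP [/negPn/eqP h1 /negPn/eqP h2].
have e : u 0 p * 2%:R = (u 0 p + v 0 p) + (u 0 p - v 0 p).
  by rewrite mulr_natr mulr2n addrACA subrr addr0.
by move: e; rewrite h1 h2 addr0 => /eqP; rewrite mulf_eq0 (negbTE two) orbF.
Qed.

Lemma supp_v n (u v : 'rV[F]_n) p : (2%:R : F) != 0 ->
  v 0 p != 0 -> ((u + v) 0 p != 0) || ((u - v) 0 p != 0).
Proof.
move=> two nz; rewrite !mxE; apply: contraR nz => /norP [/negPn/eqP h1 /negPn/eqP h2].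
have e : v 0 p * 2%:R = (u 0 p + v 0 p) - (u 0 p - v 0 p).
  by rewrite mulr_natr mulr2n opprB addrC addrA subrK.
by move: e; rewrite h1 h2 subr0 => /eqP; rewrite mulf_eq0 (negbTE two) orbF.
Qed.

End S.

Theorem mainTheorem11 (F : finFieldType) (n : nat) (C1 C2 : {vspace 'rV[F]_n}) (b : nat) :
  odd #|F| -> (1 <= b <= n)%N ->
  [/\ (minn (2 * db b (codeset C1)) (db b (codeset C2)) <= db b (pmcode C1 C2))%N,
      (minn (db b (codeset C1)) (2 * db b (codeset C2)) <= db b (pmcode C1 C2))%N,
      ((minn (db b (codeset C1)) (db b (codeset C2)) <= db b (pmcode C1 C2))%N
        /\ (db b (pmcode C1 C2) <= minn (2 * db b (codeset C1)) (2 * db b (codeset C2)))%N)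
    & (exists (x : 'rV[F]_n) (H : {set 'I_n}),
          [/\ x \in C1, x \in C2, is_hole (chi 1 x) H
            & wb b x = minn (db b (codeset C1)) (db b (codeset C2)) /\
              (b.-1 <= #|H|)%N /\
              [exists i in H, (i == 0%N :> nat) || (i == n.-1 :> nat)]]) ->
      db b (pmcode C1 C2) = minn (db b (codeset C1)) (db b (codeset C2))].
Proof.
move=> oF /andP [b1 bn].
have two := two_nz oF.
have d1L := db_leL b (codeset C1); have d2L := db_leL b (codeset C2).
have dL := db_leL b (pmcode C1 C2).
have pm_mem : forall u v, u \in C1 -> v \in C2 -> row_mx (u + v) (u - v) \in pmcode C1 C2.
  move=> u v uC vC; rewrite inE; apply/existsP; exists u; apply/existsP; exists v.
  by rewrite uC vC eqxx.
have pm_dest : forall c, c \in pmcode C1 C2 ->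
    exists u v, [/\ u \in C1, v \in C2 & c = row_mx (u + v) (u - v)].
  move=> c; rewrite inE => /existsP [u /existsP [v /and3P [uC vC /eqP ->]]].
  by exists u, v.
have cs : forall (C : {vspace 'rV[F]_n}) u, (u \in codeset C) = (u \in C).
  by move=> C u; rewrite inE.
have low_u : forall u v, u \in C1 -> u != 0 ->
    (db b (codeset C1) <= wb b (row_mx (u + v) (u - v)))%N.
  move=> u v uC nz; apply: leq_trans (db_le (c := u) _ _ _) _; rewrite ?cs //.
  by apply: wb_lower => // p; apply: supp_u.
have low_v : forall u v, v \in C2 -> v != 0 ->
    (db b (codeset C2) <= wb b (row_mx (u + v) (u - v)))%N.
  move=> u v vC nz; apply: leq_trans (db_le (c := v) _ _ _) _; rewrite ?cs //.
  by apply: wb_lower => // p; apply: supp_v.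
have dbl_u : forall u, u \in C1 -> u != 0 ->
    (2 * db b (codeset C1) <= wb b (row_mx (u + 0) (u - 0)))%N.
  move=> u uC nz; rewrite addr0 subr0.
  apply: leq_trans (_ : 2 * wb b u <= _)%N; first by rewrite leq_mul2l db_le ?cs.
  by apply: wb_double => // p ->.
have dbl_v : forall v, v \in C2 -> v != 0 ->
    (2 * db b (codeset C2) <= wb b (row_mx (0 + v) (0 - v)))%N.
  move=> v vC nz; rewrite add0r sub0r.
  apply: leq_trans (_ : 2 * wb b v <= _)%N; first by rewrite leq_mul2l db_le ?cs.
  by apply: wb_double => // p; rewrite mxE oppr_eq0 => ->.
have nzc : forall u v : 'rV[F]_n, row_mx (u + v) (u - v) != 0 -> (u != 0) || (v != 0).
  move=> u v nz; case: (boolP (u == 0)) => [/eqP u0|//].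
  case: (boolP (v == 0)) => [/eqP v0|//].
  by move: nz; rewrite u0 v0 addr0 subr0 row_mx0 eqxx.
have lowc : (minn (db b (codeset C1)) (db b (codeset C2)) <= db b (pmcode C1 C2))%N.
  apply: db_ge; first by apply: leq_trans (geq_minl _ _) _; lia.
  move=> c /pm_dest [u [v [uC vC ->]]] nz.
  case: (boolP (u == 0)) => [/eqP u0 | un].
    have vn : v != 0 by move: (nzc _ _ nz); rewrite u0 eqxx.
    by apply: leq_trans (geq_minr _ _) _; apply: low_v.
  by apply: leq_trans (geq_minl _ _) _; apply: low_u.
split.
- apply: db_ge; first by apply: leq_trans (geq_minr _ _) _; lia.
  move=> c /pm_dest [u [v [uC vC ->]]] nz.
  case: (boolP (v == 0)) => [/eqP v0 | vn].
    have un : u != 0 by move: (nzc _ _ nz); rewrite v0 eqxx orbF.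
    by apply: leq_trans (geq_minl _ _) _; rewrite v0; apply: dbl_u.
  by apply: leq_trans (geq_minr _ _) _; apply: low_v.
- apply: db_ge; first by apply: leq_trans (geq_minl _ _) _; lia.
  move=> c /pm_dest [u [v [uC vC ->]]] nz.
  case: (boolP (u == 0)) => [/eqP u0 | un].
    have vn : v != 0 by move: (nzc _ _ nz); rewrite u0 eqxx.
    by apply: leq_trans (geq_minr _ _) _; rewrite u0; apply: dbl_v.
  by apply: leq_trans (geq_minl _ _) _; apply: low_u.
- split => //; rewrite leq_min; apply/andP; split.
    apply: db_mul_le; last by lia.
    move=> u; rewrite cs => uC nz.
    have cm := pm_mem u 0 uC (mem0v _).
    apply: leq_trans (db_le b cm _) _.
      by rewrite addr0 subr0 row_mx_eq0 negb_and nz.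
    by rewrite addr0 subr0; apply: wb_upper => p; rewrite orbb.
  apply: db_mul_le; last by lia.
  move=> v; rewrite cs => vC nz.
  have cm := pm_mem 0 v (mem0v _) vC.
  apply: leq_trans (db_le b cm _) _.
    by rewrite add0r sub0r row_mx_eq0 negb_and nz.
  by rewrite add0r sub0r; apply: wb_upper => p; rewrite mxE oppr_eq0 orbb.
move=> [x [H [xC1 xC2 hole [wx [bH ex]]]]].
apply/eqP; rewrite eqn_leq lowc andbT -wx.
have K := hole_K hole bH ex.
have [a [h [_ aJ _ _ _]]] := hole.
rewrite chi1P in aJ.
have cm := pm_mem x x xC1 xC2.
apply: leq_trans (db_le b cm _) _.
  rewrite row_mx_eq0 negb_and; apply/orP; left; apply/negP => /eqP hx0.
  have := congr1 (fun m : 'rV[F]_n => m 0 a) hx0.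
  rewrite !mxE => /eqP; rewrite -mulr2n -mulr_natr mulf_eq0 (negbTE two) orbF.
  by rewrite (negbTE aJ).
rewrite subrr; apply: wb_hole => // t; rewrite mxE; apply: contra => /eqP ->.
by rewrite addr0.
Qed.
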